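(* Let $0<p_0<1$, $0\le\beta<1$, $\epsilon>0$, $\omega\ge 0$, and let $\alpha\in[0,1]$ satisfy $$\alpha\le\frac{1-\cos[\beta\arccos(1-2p_0)]}{2p_0}.$$ Put $T_c=\frac{\arccos(1-2p_0)}{\epsilon}$. Let $\omega(t),\epsilon_x(t),\epsilon_y(t)$ be real-valued functions of time with $|\omega(t)|\le\omega$ and $\sqrt{\epsilon_x^2(t)+\epsilon_y^2(t)}\le\epsilon$, and let $H(t)=[1+\omega(t)]I_z+\epsilon_x(t)I_x+\epsilon_y(t)I_y$. Suppose the pure state $|\psi(t)\rangle$ of a single qubit evolves according to $\frac{d}{dt}|\psi(t)\rangle=-iH(t)|\psi(t)\rangle$ from an initial state $|\psi(0)\rangle$ satisfying $|\langle\psi(0)|1\rangle|^2\le\alpha p_0$. Then for every $t\in[0,(1-\beta)T_c]$ the state lies in $\mathcal{D}_c=\{|\psi\rangle: |\langle 0|\psi\rangle|^2\ge 1-p_0\}$; equivalently, if a projective measurement of $\sigma_z$ is made at time $t$, the probability of failure $p=|\langle 1|\psi(t)\rangle|^2$ is at most $p_0$.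
   Context: $\sigma_x=\begin{pmatrix}0&1\\1&0\end{pmatrix}$, $\sigma_y=\begin{pmatrix}0&-i\\i&0\end{pmatrix}$, $\sigma_z=\begin{pmatrix}1&0\\0&-1\end{pmatrix}$ are the Pauli matrices and $I_j=\frac12\sigma_j$ for $j=x,y,z$. $|0\rangle=(1,0)^T$ and $|1\rangle=(0,1)^T$ are the eigenvectors of $\sigma_z$ with eigenvalues $1$ and $-1$. Units with $\hbar=1$. The ''probability of failure'' is the probability that a $\sigma_z$ measurement yields $|1\rangle$. *)

(* Defs.v *)
From Stdlib Require Import Reals.
From Coquelicot Require Import Coquelicot.
Open Scope R_scope.

(* A single-qubit state is a pair of complex amplitudes (a, b) meaning
   |psi> = a |0> + b |1>.  The Hamiltonian
   H(t) = [1+w(t)] I_z + ex(t) I_x + ey(t) I_y, with I_j = sigma_j / 2, is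
   H = 1/2 [[1+w, ex - i ey], [ex + i ey, -(1+w)]]. *)

Definition H_apply0 (w ex ey : R) (a b : C) : C :=
  (/2 : C) * ((RtoC (1 + w)) * a + (RtoC ex - Ci * RtoC ey) * b).
Definition H_apply1 (w ex ey : R) (a b : C) : C :=
  (/2 : C) * ((RtoC ex + Ci * RtoC ey) * a - (RtoC (1 + w)) * b).

Definition Tc (p0 eps : R) : R := acos (1 - 2 * p0) / eps.

(* Main.v *)
Require Import Defs.
From Stdlib Require Import Reals Lra Psatz.
From Coquelicot Require Import Coquelicot.
Open Scope R_scope.
Lemma deriv_cont (f : R -> R) x l : is_derive f x l ->
  forall e, 0 < e -> exists d, 0 < d /\ forall y, Rabs (y - x) < d -> Rabs (f y - f x) < e.
Proof.
  intros H e He.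
  apply is_derive_Reals in H.
  assert (Hc : continuity_pt f x) by (apply derivable_continuous_pt; exists l; exact H).
  destruct (Hc e He) as [d [Hd Hd']].
  exists d; split; [lra|]. intros y Hy.
  destruct (Req_dec y x) as [->|Hne].
  - rewrite Rminus_eq_0, Rabs_R0; lra.
  - apply (Hd' y). split; [split; [exact I| auto] | exact Hy].
Qed.

Lemma barrier (D D' : R -> R) (T : R) :
  (forall t, 0 <= t <= T -> is_derive D t (D' t)) ->
  D 0 < 0 ->
  (forall t, 0 < t <= T -> D t = 0 -> D' t < 0) ->
  forall t, 0 <= t <= T -> D t < 0.
Proof.
  intros Hd H0 Hz t2 Ht2.
  destruct (Rlt_or_le (D t2) 0) as [Hlt|Hge]; [exact Hlt|exfalso].
  set (S := fun s => 0 <= s <= t2 /\ forall u, 0 <= u <= s -> D u < 0).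
  assert (Hb : bound S) by (exists t2; intros s [Hs _]; lra).
  assert (He : exists s, S s) by (exists 0; split; [lra| intros u Hu; replace u with 0 by lra; exact H0]).
  destruct (completeness S Hb He) as [m [Hub Hlub]].
  assert (Hm0 : 0 <= m) by (apply Hub; split; [lra| intros u Hu; replace u with 0 by lra; exact H0]).
  assert (Hmt : m <= t2) by (apply Hlub; intros s [Hs _]; lra).
  assert (Hleft : forall u, 0 <= u < m -> D u < 0).
  { intros u Hu. destruct (Rle_or_lt m u) as [Hmu|Hum]; [lra|].
    destruct (Classical_Prop.classic (exists s, S s /\ u <= s)) as [[s [[Hs1 Hs2] Hus]]|Hn].
    - apply Hs2; lra.
    - assert (m <= u); [|lra]. apply Hlub. intros s Hs.
      destruct (Rle_or_lt s u); auto. exfalso; apply Hn; exists s; split; auto; lra. }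
  assert (HdM : is_derive D m (D' m)) by (apply Hd; lra).
  destruct (Rlt_or_le (D m) 0) as [Hm|Hm].
  - destruct (deriv_cont D m _ HdM (- D m)) as [d [Hd0 Hdd]]; [lra|].
    assert (Hnear : forall u, m <= u < m + d -> D u < 0).
    { intros u Hu. specialize (Hdd u). assert (Rabs (D u - D m) < - D m) by (apply Hdd; rewrite Rabs_right; lra).
      apply Rabs_def2 in H. lra. }
    destruct (Rlt_or_le m t2) as [Hmt2|Hmt2].
    + set (s' := Rmin (m + d/2) t2).
      assert (S s').
      { split. unfold s'; split; [apply Rmin_glb; lra| apply Rmin_r].
        intros u Hu. destruct (Rlt_or_le u m). apply Hleft; lra.
        apply Hnear. split; auto. assert (s' <= m + d/2) by apply Rmin_l. lra. }
      assert (s' <= m) by (apply Hub; auto).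
      unfold s', Rmin in H1. destruct (Rle_dec (m + d/2) t2); lra.
    + replace t2 with m in Hge by lra. lra.
  - assert (Hmpos : 0 < m).
    { destruct Hm0 as [Hp|He0]; auto. subst m. lra. }
    assert (HDm : D m = 0).
    { destruct Hm as [Hp|Heq]; [|auto].
      destruct (deriv_cont D m _ HdM (D m)) as [d [Hd0 Hdd]]; [lra|].
      set (u := m - Rmin (d/2) (m/2)).
      assert (Rmin (d/2) (m/2) <= d/2) by apply Rmin_l.
      assert (Rmin (d/2) (m/2) <= m/2) by apply Rmin_r.
      assert (0 < Rmin (d/2) (m/2)) by (apply Rmin_glb_lt; lra).
      assert (D u < 0) by (apply Hleft; unfold u; lra).
      assert (Hq : Rabs (D u - D m) < D m) by (apply Hdd; unfold u; rewrite Rabs_left; lra).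
      apply Rabs_def2 in Hq. lra. }
    assert (Hneg : D' m < 0) by (apply Hz; auto; lra).
    apply is_derive_Reals in HdM.
    destruct (HdM (- D' m / 2)) as [d Hdd]; [lra|].
    set (h := - Rmin (d/2) (m/2)).
    assert (Rmin (d/2) (m/2) <= d/2) by apply Rmin_l.
    assert (Rmin (d/2) (m/2) <= m/2) by apply Rmin_r.
    assert (0 < Rmin (d/2) (m/2)) by (apply Rmin_glb_lt; [destruct d; simpl; lra|lra]).
    assert (Hh : h <> 0) by (unfold h; lra).
    assert (Hhd : Rabs h < d) by (unfold h; rewrite Rabs_left; [destruct d; simpl in *; lra | lra]).
    specialize (Hdd h Hh Hhd).
    assert (D (m + h) < 0) by (apply Hleft; unfold h; lra).
    rewrite HDm, Rminus_0_r in Hdd.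
    apply Rabs_def2 in Hdd. destruct Hdd as [Hdd1 Hdd2].
    assert (D (m + h) / h > 0).
    { unfold Rdiv. assert (/ h < 0) by (apply Rinv_lt_0_compat; unfold h; lra). nra. }
    lra.
Qed.

Lemma deriv_fst (f : R -> C) t l : is_derive f t l -> is_derive (fun x => fst (f x)) t (fst l).
Proof. intros H. unfold is_derive in *.
  apply (filterdiff_comp' f (fun u : C_R_NormedModule => fst u) t _ (fun u : C_R_NormedModule => fst u) H).
  apply filterdiff_linear. apply (@is_linear_fst R_AbsRing R_NormedModule R_NormedModule).
Qed.
Lemma deriv_snd (f : R -> C) t l : is_derive f t l -> is_derive (fun x => snd (f x)) t (snd l).
Proof. intros H. unfold is_derive in *.
  apply (filterdiff_comp' f (fun u : C_R_NormedModule => snd u) t _ (fun u : C_R_NormedModule => snd u) H).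
  apply filterdiff_linear. apply (@is_linear_snd R_AbsRing R_NormedModule R_NormedModule).
Qed.

Lemma deriv_fst' (f : R -> C) t l r : is_derive f t l -> fst l = r -> is_derive (fun x => fst (f x)) t r.
Proof. intros H <-. apply deriv_fst; exact H. Qed.
Lemma deriv_snd' (f : R -> C) t l r : is_derive f t l -> snd l = r -> is_derive (fun x => snd (f x)) t r.
Proof. intros H <-. apply deriv_snd; exact H. Qed.

Lemma c0 w ex ey a1 a2 b1 b2 :
  fst (- Ci * H_apply0 w ex ey (a1,a2) (b1,b2))%C = ((1+w)*a2 + ex*b2 - ey*b1)/2 /\
  snd (- Ci * H_apply0 w ex ey (a1,a2) (b1,b2))%C = -((1+w)*a1 + ex*b1 + ey*b2)/2 /\
  fst (- Ci * H_apply1 w ex ey (a1,a2) (b1,b2))%C = (ex*a2 + ey*a1 - (1+w)*b2)/2 /\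
  snd (- Ci * H_apply1 w ex ey (a1,a2) (b1,b2))%C = -(ex*a1 - ey*a2 - (1+w)*b1)/2.
Proof. unfold H_apply0, H_apply1, Ci, RtoC; simpl. repeat split; field. Qed.

Lemma Cmod2 z : Cmod z ^ 2 = fst z ^ 2 + snd z ^ 2.
Proof. unfold Cmod. rewrite pow2_sqrt; [reflexivity| nra]. Qed.

Lemma cosdiff x h : 0 <= h -> cos x - cos (x + h) <= h.
Proof.
  intros Hh. rewrite form2.
  replace ((x - (x + h)) / 2) with (- (h/2)) by field.
  rewrite sin_neg.
  assert (Hs : - (h/2) <= sin (h/2) <= h/2).
  { destruct (Rle_or_lt 1 (h/2)).
    - pose proof (SIN_bound (h/2)); lra.
    - destruct (Req_dec h 0) as [->|Hn].
      + replace (0/2) with 0 by field. rewrite sin_0; lra.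
      + assert (0 < sin (h/2)) by (apply sin_gt_0; pose proof PI2_1; lra).
        pose proof (sin_lt_x (h/2)). assert (sin (h/2) < h/2) by (apply sin_lt_x; lra). lra. }
  pose proof (SIN_bound ((x + (x + h)) / 2)). nra.
Qed.

Theorem theorem1
  (p0 beta eps wmax alpha : R)
  (Hp0 : 0 < p0 < 1) (Hbeta : 0 <= beta < 1) (Heps : 0 < eps) (Hw : 0 <= wmax)
  (Halpha : 0 <= alpha <= 1)
  (Halpha_bd : alpha <= (1 - cos (beta * acos (1 - 2 * p0))) / (2 * p0))
  (w ex ey : R -> R)
  (Hwt : forall t, Rabs (w t) <= wmax)
  (Hext : forall t, sqrt (ex t ^ 2 + ey t ^ 2) <= eps)
  (a b : R -> C)
  (Hnorm : Cmod (a 0) ^ 2 + Cmod (b 0) ^ 2 = 1)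
  (Hda : forall t, 0 <= t ->
     is_derive a t (- Ci * H_apply0 (w t) (ex t) (ey t) (a t) (b t))%C)
  (Hdb : forall t, 0 <= t ->
     is_derive b t (- Ci * H_apply1 (w t) (ex t) (ey t) (a t) (b t))%C)
  (Hinit : Cmod (b 0) ^ 2 <= alpha * p0) :
  forall t, 0 <= t <= (1 - beta) * Tc p0 eps ->
    1 - p0 <= Cmod (a t) ^ 2 /\ Cmod (b t) ^ 2 <= p0.
Proof.
  intros t Ht.
  pose (a1 := fun s => fst (a s)). pose (a2 := fun s => snd (a s)).
  pose (b1 := fun s => fst (b s)). pose (b2 := fun s => snd (b s)).
  assert (Hder : forall s, 0 <= s ->
    is_derive a1 s (((1+w s)*a2 s + ex s*b2 s - ey s*b1 s)/2) /\
    is_derive a2 s (-((1+w s)*a1 s + ex s*b1 s + ey s*b2 s)/2) /\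
    is_derive b1 s ((ex s*a2 s + ey s*a1 s - (1+w s)*b2 s)/2) /\
    is_derive b2 s (-(ex s*a1 s - ey s*a2 s - (1+w s)*b1 s)/2)).
  { intros s Hs.
    destruct (c0 (w s) (ex s) (ey s) (fst (a s)) (snd (a s)) (fst (b s)) (snd (b s))) as [e1 [e2 [e3 e4]]].
    rewrite <- !surjective_pairing in e1, e2, e3, e4.
    pose proof (Hda s Hs) as Ha. pose proof (Hdb s Hs) as Hb.
    split; [|split; [|split]].
    - eapply deriv_fst'; [exact Ha| exact e1].
    - eapply deriv_snd'; [exact Ha| exact e2].
    - eapply deriv_fst'; [exact Hb| exact e3].
    - eapply deriv_snd'; [exact Hb| exact e4]. }
  pose (P := fun s => b1 s ^ 2 + b2 s ^ 2).
  pose (N := fun s => a1 s ^ 2 + a2 s ^ 2 + P s).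
  pose (Pd := fun s => ex s * (b1 s * a2 s - b2 s * a1 s) + ey s * (b1 s * a1 s + b2 s * a2 s)).
  assert (HPd : forall s, 0 <= s -> is_derive P s (Pd s)).
  { intros s Hs. destruct (Hder s Hs) as [_ [_ [H3 H4]]].
    pose proof (is_derive_plus _ _ s _ _ (is_derive_pow _ 2 s _ H3) (is_derive_pow _ 2 s _ H4)) as H.
    unfold P. replace (Pd s) with (plus (INR 2 * ((ex s * a2 s + ey s * a1 s - (1 + w s) * b2 s) / 2) * b1 s ^ Init.Nat.pred 2)
     (INR 2 * (- (ex s * a1 s - ey s * a2 s - (1 + w s) * b1 s) / 2) * b2 s ^ Init.Nat.pred 2)).
    exact H. unfold Pd, plus; simpl. field. }
  assert (HNd : forall s, 0 <= s -> is_derive N s 0).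
  { intros s Hs. destruct (Hder s Hs) as [H1 [H2 _]].
    pose proof (is_derive_plus _ _ s _ _ (is_derive_plus _ _ s _ _ (is_derive_pow _ 2 s _ H1) (is_derive_pow _ 2 s _ H2)) (HPd s Hs)) as H.
    unfold N. evar (L : R). replace 0 with L. exact H. unfold L, Pd, plus; simpl. field. }
  assert (HN : forall s, 0 <= s -> N s = 1).
  { assert (HN0 : N 0 = 1).
    { rewrite !Cmod2 in Hnorm. unfold N, P, a1, a2, b1, b2. lra. }
    intros s [Hs|Hs]; [|subst s; exact HN0].
    destruct (MVT_cor2 N (fun _ => 0) 0 s Hs) as [c [Hc _]].
    { intros c Hc. apply is_derive_Reals. apply HNd; lra. }
    lra. }
  assert (Hbd : forall s, 0 <= s -> Pd s ^ 2 <= eps ^ 2 * (P s * (1 - P s))).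
  { intros s Hs. specialize (HN s Hs). specialize (Hext s).
    assert (He2 : ex s ^ 2 + ey s ^ 2 <= eps ^ 2).
    { rewrite <- (pow2_sqrt (ex s ^ 2 + ey s ^ 2)) by nra.
      pose proof (sqrt_pos (ex s ^ 2 + ey s ^ 2)). nra. }
    unfold N in HN.
    assert (E1 : Pd s ^ 2 + (ex s * (b1 s * a1 s + b2 s * a2 s) - ey s * (b1 s * a2 s - b2 s * a1 s)) ^ 2
               = (ex s ^ 2 + ey s ^ 2) * ((a1 s ^ 2 + a2 s ^ 2) * P s)) by (unfold Pd, P; ring).
    assert (0 <= P s) by (unfold P; nra).
    assert (0 <= a1 s ^ 2 + a2 s ^ 2) by nra.
    replace (1 - P s) with (a1 s ^ 2 + a2 s ^ 2) by lra.
    assert (HX : 0 <= (a1 s ^ 2 + a2 s ^ 2) * P s) by (apply Rmult_le_pos; assumption).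
    assert (Pd s ^ 2 <= (ex s ^ 2 + ey s ^ 2) * ((a1 s ^ 2 + a2 s ^ 2) * P s)).
    { rewrite <- E1. pose proof (pow2_ge_0 (ex s * (b1 s * a1 s + b2 s * a2 s) - ey s * (b1 s * a2 s - b2 s * a1 s))). lra. }
    assert ((ex s ^ 2 + ey s ^ 2) * ((a1 s ^ 2 + a2 s ^ 2) * P s) <= eps ^ 2 * ((a1 s ^ 2 + a2 s ^ 2) * P s))
      by (apply Rmult_le_compat_r; assumption).
    rewrite (Rmult_comm (P s)). lra. }
  assert (HA : 0 < acos (1 - 2*p0) < PI) by (apply acos_bound_lt; lra).
  assert (HcA : cos (acos (1 - 2*p0)) = 1 - 2*p0) by (apply cos_acos; lra).
  assert (HepsT : eps * ((1 - beta) * Tc p0 eps) = (1-beta) * acos (1 - 2*p0)) by (unfold Tc; field; lra).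
  set (A := acos (1 - 2*p0)) in *.
  set (T := (1 - beta) * Tc p0 eps) in *.
  assert (HT0 : 0 <= T) by lra.
  assert (HP0 : P 0 <= (1 - cos (beta*A))/2).
  { replace (P 0) with (Cmod (b 0) ^2) by (rewrite Cmod2; reflexivity).
    assert (alpha*p0 <= (1 - cos(beta*A))/2).
    { apply Rmult_le_compat_r with (r:=p0) in Halpha_bd; [|lra].
      replace ((1 - cos (beta*A))/(2*p0) * p0) with ((1-cos(beta*A))/2) in Halpha_bd by (field; lra).
      exact Halpha_bd. }
    lra. }
  assert (HbA : beta * A <= A) by nra.
  assert (HbA0 : 0 <= beta * A) by nra.
  assert (Hmain : forall d, 0 < d -> d * (1 + T) < PI - A -> P t < (1 - cos (beta*A + d + (eps+d)*t))/2).
  { intros d Hd Hdsmall.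
    pose (D := fun s => P s - (1 - cos (beta*A + d + (eps+d)*s))/2).
    pose (D' := fun s => Pd s - (eps+d) * sin (beta*A + d + (eps+d)*s) / 2).
    assert (Hbar := barrier D D' T).
    enough (D t < 0) by (unfold D in H; lra).
    assert (HdT : d <= d * (1 + T)) by nra.
    apply Hbar; [ | | |lra].
    - intros s Hs.
      assert (Hq : is_derive (fun s => (1 - cos (beta*A + d + (eps+d)*s))/2) s ((eps+d) * sin(beta*A+d+(eps+d)*s)/2)).
      { auto_derive; [exact I | lra]. }
      exact (is_derive_minus _ _ s _ _ (HPd s ltac:(lra)) Hq).
    - unfold D. rewrite Rmult_0_r, Rplus_0_r.
      assert (cos (beta*A + d) < cos (beta*A)) by (apply cos_decreasing_1; lra).
      lra.
    - intros s [Hs0 HsT] HD0.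
      assert (Hks : (eps+d)*s <= (eps+d)*T) by (apply Rmult_le_compat_l; lra).
      set (c := beta*A + d + (eps+d)*s) in *.
      assert (Hk0 : 0 <= (eps+d)*s) by (apply Rmult_le_pos; lra).
      assert (HkT : (eps+d)*T = (1-beta)*A + d*T) by (rewrite Rmult_plus_distr_r, HepsT; ring).
      assert (HdT' : d * (1 + T) = d + d*T) by ring.
      assert (HbA' : (1-beta)*A = A - beta*A) by ring.
      assert (Hc : 0 < c < PI) by (unfold c; split; lra).
      assert (Hsin : 0 < sin c) by (apply sin_gt_0; lra).
      assert (HPs : P s = (1 - cos c)/2) by (assert (HD1 : P s - (1 - cos c)/2 = 0) by exact HD0; lra).
      pose proof (Hbd s ltac:(lra)) as Hb2. rewrite HPs in Hb2.
      pose proof (sin2_cos2 c) as Hsc. unfold Rsqr in Hsc.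
      assert (Hs2 : sin c * sin c = 1 - cos c * cos c) by lra.
      assert (E : eps ^ 2 * ((1 - cos c) / 2 * (1 - (1 - cos c) / 2)) = (eps * sin c / 2) ^ 2).
      { replace ((eps * sin c / 2) ^ 2) with (eps^2 * (sin c * sin c) / 4) by field. rewrite Hs2. field. }
      assert (Pd s ^ 2 <= (eps * sin c / 2) ^ 2) by lra.
      assert (HX : 0 < eps * sin c / 2) by (apply Rdiv_lt_0_compat; [apply Rmult_lt_0_compat|]; lra).
      assert (Pd s <= eps * sin c / 2).
      { destruct (Rle_or_lt (Pd s) (eps * sin c / 2)) as [Hl|Hl]; [exact Hl|].
        assert ((eps * sin c / 2) * (eps * sin c / 2) < Pd s * Pd s) by (apply Rmult_le_0_lt_compat; lra).
        simpl in *. lra. }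
      unfold D'. fold c. nra. }
  set (Q := (1 - cos(beta*A + eps*t))/2).
  assert (HPQ : P t <= Q).
  { destruct (Rle_or_lt (P t) Q) as [Hle|Hgt]; [exact Hle| exfalso].
    set (g := P t - Q).
    set (d := Rmin ((PI-A)/(2*(1+T))) (g/(2*(1+t)))).
    assert (Hd1 : d <= (PI-A)/(2*(1+T))) by apply Rmin_l.
    assert (Hd2 : d <= g/(2*(1+t))) by apply Rmin_r.
    assert (Hd0 : 0 < d) by (apply Rmin_glb_lt; apply Rdiv_lt_0_compat; unfold g; lra).
    assert (Hsm : d * (1 + T) < PI - A).
    { apply Rmult_le_compat_r with (r := 1+T) in Hd1; [|lra].
      replace ((PI - A) / (2 * (1 + T)) * (1 + T)) with ((PI-A)/2) in Hd1 by (field; lra). lra. }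
    pose proof (Hmain d Hd0 Hsm) as HM.
    replace (beta * A + d + (eps + d) * t) with ((beta*A + eps*t) + d*(1+t)) in HM by ring.
    pose proof (cosdiff (beta*A + eps*t) (d*(1+t)) ltac:(nra)).
    apply Rmult_le_compat_r with (r := 1+t) in Hd2; [|lra].
    replace (g / (2 * (1 + t)) * (1 + t)) with (g/2) in Hd2 by (field; lra).
    assert (Qe : Q = (1 - cos(beta*A+eps*t))/2) by reflexivity.
    assert (ge : g = P t - Q) by reflexivity.
    clearbody g d Q. lra. }
  assert (HQ : Q <= p0).
  { unfold Q. assert (eps * t <= eps * T) by (apply Rmult_le_compat_l; lra).
    assert (cos A <= cos (beta*A + eps*t)) by (apply cos_decr_1; nra).
    lra. }
  rewrite !Cmod2. pose proof (HN t ltac:(lra)) as HNt. unfold N, P, a1, a2, b1, b2 in *.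
  split; lra.
Qed.
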